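(* Let $w$ be a word over $\{L,R\}$ and let $u\in\mathcal{L}_w$. Then $u$ is derivable from $w$, i.e. $u$ is a tail of a word obtained from $w$ by finitely many applications of the reduction rules (1), (1'), (2), (2').
   Context: Words are finite strings (including the empty word) over $\{L,R\}$; $|w|$ is the length. A tail of $w$ is any word $v'$ with $w=vv'$ for some word $v$. A word $u$ is derivable from $w$ if it is obtained from $w$ by finitely many successive applications (in any order) of the following rules, where $v,v'$ denote arbitrary words: (1) $vRRv'\Rightarrow vRv'$; (1') $vLLv'\Rightarrow vLv'$; (2) $vLRv'\Rightarrow vv'$; (2') $vRLv'\Rightarrow vv'$ (rules of reduction); (3) $vv'\Rightarrow v'$ (tail formation). For a set $\mathcal{S}$ of words, $\mathcal{S}^L$ (resp. $\mathcal{S}^R$) is the set of words in $\mathcal{S}$ starting with $L$ (resp. $R$), and $L(\mathcal{S})=\{Ls: s\in\mathcal{S}\}$, $R(\mathcal{S})=\{Rs:s\in\mathcal{S}\}$. The language $\mathcal{L}_w$ is defined recursively: if $|w|\le 2$, $\mathcal{L}_w$ is the set of tails of $w$; if $|w|>2$, then $\mathcal{L}_w=\mathcal{L}_{Rw'}\cup L(\mathcal{L}^R_{Rw'})$ when $w=LRw'$; $\mathcal{L}_w=\mathcal{L}_{LLw'}\cup L(\mathcal{L}^L_{LLw'})$ when $w=LLLw'$; $\mathcal{L}_w=\mathcal{L}_{LRw'}\cup L(\mathcal{L}_{LRw'})$ when $w=LLRw'$; and dually (interchanging the letters $L$ and $R$ everywhere) when $w$ starts with $R$. *)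

(* Defs.v *)
From Stdlib Require Import List Relations.
Import ListNotations.

Inductive letter : Type := L | R.

Definition word := list letter.

Definition is_tail (v' w : word) : Prop := exists v : word, w = v ++ v'.

Definition starts_with (a : letter) (s : word) : Prop := exists t, s = a :: t.

Inductive step : word -> word -> Prop :=
| rule1  : forall v v', step (v ++ R :: R :: v') (v ++ R :: v')
| rule1' : forall v v', step (v ++ L :: L :: v') (v ++ L :: v')
| rule2  : forall v v', step (v ++ L :: R :: v') (v ++ v')
| rule2' : forall v v', step (v ++ R :: L :: v') (v ++ v')
| rule3  : forall v v', step (v ++ v') v'.

Definition derivable (w u : word) : Prop := clos_refl_trans word step w u.

Fixpoint lang (w : word) : word -> Prop :=
  match w with
  | L :: ((R :: _ :: _) as v) =>
      fun u => lang v u \/ exists s, u = L :: s /\ lang v s /\ starts_with R s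
  | L :: ((L :: L :: _) as v) =>
      fun u => lang v u \/ exists s, u = L :: s /\ lang v s /\ starts_with L s
  | L :: ((L :: R :: _) as v) =>
      fun u => lang v u \/ exists s, u = L :: s /\ lang v s
  | R :: ((L :: _ :: _) as v) =>
      fun u => lang v u \/ exists s, u = R :: s /\ lang v s /\ starts_with L s
  | R :: ((R :: R :: _) as v) =>
      fun u => lang v u \/ exists s, u = R :: s /\ lang v s /\ starts_with R s
  | R :: ((R :: L :: _) as v) =>
      fun u => lang v u \/ exists s, u = R :: s /\ lang v s
  | _ => fun u => is_tail u w
  end.

(* Main.v *)
Require Import Defs.
From Stdlib Require Import List Relations Lia.
Import ListNotations.

Inductive rstep : word -> word -> Prop :=
| r1  : forall v v', rstep (v ++ R :: R :: v') (v ++ R :: v')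
| r1' : forall v v', rstep (v ++ L :: L :: v') (v ++ L :: v')
| r2  : forall v v', rstep (v ++ L :: R :: v') (v ++ v')
| r2' : forall v v', rstep (v ++ R :: L :: v') (v ++ v').

Definition red := clos_refl_trans word rstep.

Definition opp (a : letter) : letter := match a with L => R | R => L end.

Lemma letter_cases : forall a b, b = a \/ b = opp a.
Proof. destruct a, b; simpl; auto. Qed.

Lemma opp_neq : forall a, a <> opp a.
Proof. destruct a; discriminate. Qed.

Lemma opp_opp : forall a, opp (opp a) = a.
Proof. destruct a; reflexivity. Qed.

Lemma rstep_pre : forall a x y, rstep x y -> rstep (a :: x) (a :: y).
Proof.
  intros a x y H; destruct H;
  [apply (r1 (a::v)) | apply (r1' (a::v)) | apply (r2 (a::v)) | apply (r2' (a::v))].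
Qed.

Lemma red_pre : forall a x y, red x y -> red (a :: x) (a :: y).
Proof.
  intros a x y H; induction H.
  - apply rt_step, rstep_pre; auto.
  - apply rt_refl.
  - eapply rt_trans; eauto.
Qed.

Lemma red_trans : forall x y z, red x y -> red y z -> red x z.
Proof. intros; eapply rt_trans; eauto. Qed.

Lemma red_refl : forall x, red x x.
Proof. intros; apply rt_refl. Qed.

Lemma red_dup : forall a x, red (a :: a :: x) (a :: x).
Proof.
  intros [|] x; apply rt_step; [apply (r1' []) | apply (r1 [])].
Qed.

Lemma red_cancel : forall a x, red (a :: opp a :: x) x.
Proof.
  intros [|] x; apply rt_step; [apply (r2 []) | apply (r2' [])].
Qed.

Lemma red_nf : forall x, exists n, red x n /\ length n <= 1.
Proof.
  induction x as [|y x IH].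
  - exists []; split; [apply red_refl | simpl; lia].
  - destruct IH as [n [Hn Hl]].
    destruct n as [|z [|]]; [| | simpl in Hl; lia].
    + exists [y]; split; [apply red_pre; auto | simpl; lia].
    + destruct (letter_cases y z) as [->| ->].
      * exists [y]; split; [| simpl; lia].
        eapply red_trans; [apply red_pre; eauto | apply red_dup].
      * exists []; split; [| simpl; lia].
        eapply red_trans; [apply red_pre; eauto | apply red_cancel].
Qed.

Lemma red_collapse : forall a x, red (a :: a :: x) [a].
Proof.
  intros a x. destruct (red_nf x) as [n [Hn Hl]].
  eapply red_trans; [apply red_pre, red_pre; eauto|].
  destruct n as [|z [|]]; [| | simpl in Hl; lia].
  - apply red_dup.
  - destruct (letter_cases a z) as [->| ->].
    + eapply red_trans; [apply red_dup| apply red_dup].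
    + apply red_pre, red_cancel.
Qed.

Definition Inv (w : word) : Prop := forall u, lang w u ->
  (exists x, red w x /\ is_tail u x) /\
  (forall c t t', u = c :: t -> w = c :: t' -> red w u) /\
  (forall c t, u = c :: t -> red (c :: w) u) /\
  (forall a t, w = a :: t -> red (a :: w) (a :: u)).

Lemma lang_I : forall a c x u, lang (a :: opp a :: c :: x) u <->
  lang (opp a :: c :: x) u \/
  exists s, u = a :: s /\ lang (opp a :: c :: x) s /\ starts_with (opp a) s.
Proof. intros [|] [|] x u; simpl; tauto. Qed.

Lemma lang_II : forall a x u, lang (a :: a :: a :: x) u <->
  lang (a :: a :: x) u \/
  exists s, u = a :: s /\ lang (a :: a :: x) s /\ starts_with a s.
Proof. intros [|] x u; simpl; tauto. Qed.

Lemma lang_III : forall a x u, lang (a :: a :: opp a :: x) u <->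
  lang (a :: opp a :: x) u \/
  exists s, u = a :: s /\ lang (a :: opp a :: x) s.
Proof. intros [|] x u; simpl; tauto. Qed.

Lemma tail_cons : forall a u x, is_tail u x -> is_tail u (a :: x).
Proof. intros a u x [p ->]. exists (a :: p); reflexivity. Qed.

Lemma tail_refl : forall u, is_tail u u.
Proof. intros u; exists []; reflexivity. Qed.

Lemma D_head : forall a v u t, (forall c t t', u = c :: t -> a :: v = c :: t' -> red (a::v) u) ->
  u = a :: t -> red (a :: a :: v) u.
Proof.
  intros a v u t HB Hu. eapply red_trans; [apply red_dup|]. eapply HB; eauto.
Qed.

Lemma tail0 : forall u, is_tail u [] -> u = [].
Proof. intros u [p Hp]. destruct p, u; simpl in Hp; try discriminate; auto. Qed.

Lemma tail1 : forall a u, is_tail u [a] -> u = [a] \/ u = [].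
Proof.
  intros a u [p Hp]. destruct p as [|x [|y p]]; simpl in Hp; auto.
  - injection Hp; intros; subst; auto.
  - discriminate.
Qed.

Lemma tail2 : forall a b u, is_tail u [a; b] -> u = [a; b] \/ u = [b] \/ u = [].
Proof.
  intros a b u [p Hp]. destruct p as [|x [|y [|z p]]]; simpl in Hp; auto.
  - injection Hp; intros; subst; auto.
  - injection Hp; intros; subst; auto.
  - discriminate.
Qed.

Lemma Inv_small : forall w, length w <= 2 -> Inv w.
Proof.
  intros w Hl u Hu.
  assert (Ht : is_tail u w).
  { destruct w as [|a [|b [|c w]]]; simpl in Hl; try lia;
      [simpl in Hu; auto | destruct a; simpl in Hu; auto | destruct a, b; simpl in Hu; auto]. }
  split; [exists w; split; [apply red_refl | auto]|].
  destruct w as [|a [|b [|c w]]]; simpl in Hl; try lia.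
  - apply tail0 in Ht; subst u.
    split; [intros; discriminate|]. split; intros; discriminate.
  - destruct (tail1 _ _ Ht) as [->| ->].
    + split; [intros; apply red_refl|]. split.
      * intros c t Hc; injection Hc; intros; subst. apply red_dup.
      * intros a' t Ha; injection Ha; intros; subst. apply red_refl.
    + split; [intros; discriminate|]. split.
      * intros; discriminate.
      * intros a' t Ha; injection Ha; intros; subst. apply red_dup.
  - destruct (tail2 _ _ _ Ht) as [->|[->| ->]].
    + split; [intros; apply red_refl|]. split.
      * intros c t Hc; injection Hc; intros; subst. apply red_dup.
      * intros a' t Ha; injection Ha; intros; subst. apply red_refl.
    + split; [intros c t t' H1 H2; injection H1; injection H2; intros; subst; apply red_dup|].
      split.
      * intros c t Hc; injection Hc; intros; subst.
        destruct (letter_cases c a) as [->| ->].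
        -- eapply red_trans; [apply red_dup | apply red_dup].
        -- apply red_cancel.
      * intros a' t Ha; injection Ha; intros; subst. apply red_dup.
    + split; [intros; discriminate|]. split; [intros; discriminate|].
      intros a' t Ha; injection Ha; intros; subst. apply red_collapse.
Qed.

Lemma red_cancel' : forall a x, red (opp a :: a :: x) x.
Proof. intros [|] x; [apply (red_cancel R) | apply (red_cancel L)]. Qed.

Lemma Inv_I : forall a c x, Inv (opp a :: c :: x) -> Inv (a :: opp a :: c :: x).
Proof.
  intros a c x IH u Hu. apply lang_I in Hu.
  destruct Hu as [Hu | [s [-> [Hs [t ->]]]]].
  - destruct (IH u Hu) as [[x0 [Hx0 Ht]] [HB [HD HC]]].
    assert (B : forall c' t t', u = c' :: t -> a :: opp a :: c :: x = c' :: t' ->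
               red (a :: opp a :: c :: x) u).
    { intros c' t t' Hu' Hw. injection Hw; intros _ <-. apply (HD a t Hu'). }
    split; [exists (a :: x0); split; [apply red_pre; auto | apply tail_cons; auto]|].
    split; [exact B|]. split.
    + intros c' t Hu'. destruct (letter_cases a c') as [->| ->].
      * apply D_head with t; [exact B | exact Hu'].
      * eapply red_trans; [apply red_cancel'|]. apply (HB (opp a) t (c::x)); auto.
    + intros a' t Hw; injection Hw; intros _ <-. destruct u as [|c' t'].
      * apply red_collapse.
      * destruct (letter_cases a c') as [->| ->].
        -- apply red_pre. apply (HD a t'); auto.
        -- eapply red_trans; [apply red_dup|]. apply red_pre.
           apply (HB (opp a) t' (c::x)); auto.
  - destruct (IH _ Hs) as [_ [HB _]].
    assert (Hvs : red (opp a :: c :: x) (opp a :: t)) by (apply (HB (opp a) t (c::x)); auto).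
    assert (B : forall c' t0 t', a :: opp a :: t = c' :: t0 -> a :: opp a :: c :: x = c' :: t' ->
               red (a :: opp a :: c :: x) (a :: opp a :: t)).
    { intros; apply red_pre; auto. }
    split; [exists (a :: opp a :: t); split; [apply red_pre; auto | apply tail_refl]|].
    split; [exact B|]. split.
    + intros c' t' H. injection H; intros; subst c'. apply D_head with (opp a :: t); [exact B | reflexivity].
    + intros a' t' Hw; injection Hw; intros _ <-. apply red_pre, red_pre; auto.
Qed.

Lemma Inv_II : forall a x, Inv (a :: a :: x) -> Inv (a :: a :: a :: x).
Proof.
  intros a x IH u Hu. apply lang_II in Hu.
  destruct Hu as [Hu | [s [-> [Hs [t ->]]]]].
  - destruct (IH u Hu) as [[x0 [Hx0 Ht]] [HB [HD HC]]].
    assert (B : forall c' t t', u = c' :: t -> a :: a :: a :: x = c' :: t' ->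
               red (a :: a :: a :: x) u).
    { intros c' t t' Hu' Hw. injection Hw; intros _ <-.
      eapply red_trans; [apply red_dup|]. apply (HB a t (a :: x)); auto. }
    split; [exists (a :: x0); split; [apply red_pre; auto | apply tail_cons; auto]|].
    split; [exact B|]. split.
    + intros c' t Hu'. destruct (letter_cases a c') as [->| ->].
      * apply D_head with t; [exact B | exact Hu'].
      * eapply red_trans; [apply red_pre, red_dup|]. apply (HD (opp a) t); auto.
    + intros a' t Hw; injection Hw; intros _ <-.
      eapply red_trans; [apply red_dup|]. apply (HC a (a :: x)); auto.
  - destruct (IH _ Hs) as [_ [HB _]].
    assert (Hvs : red (a :: a :: x) (a :: t)) by (apply (HB a t (a :: x)); auto).
    assert (B : forall c' t0 t', a :: a :: t = c' :: t0 -> a :: a :: a :: x = c' :: t' ->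
               red (a :: a :: a :: x) (a :: a :: t)).
    { intros; apply red_pre; auto. }
    split; [exists (a :: a :: t); split; [apply red_pre; auto | apply tail_refl]|].
    split; [exact B|]. split.
    + intros c' t' H. injection H; intros; subst c'. apply D_head with (a :: t); [exact B | reflexivity].
    + intros a' t' Hw; injection Hw; intros _ <-. apply red_pre, red_pre; auto.
Qed.

Lemma Inv_III : forall a x, Inv (a :: opp a :: x) -> Inv (a :: a :: opp a :: x).
Proof.
  intros a x IH u Hu. apply lang_III in Hu.
  destruct Hu as [Hu | [s [-> Hs]]].
  - destruct (IH u Hu) as [[x0 [Hx0 Ht]] [HB [HD HC]]].
    assert (B : forall c' t t', u = c' :: t -> a :: a :: opp a :: x = c' :: t' ->
               red (a :: a :: opp a :: x) u).
    { intros c' t t' Hu' Hw. injection Hw; intros _ <-.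
      eapply red_trans; [apply red_dup|]. apply (HB a t (opp a :: x)); auto. }
    split; [exists (a :: x0); split; [apply red_pre; auto | apply tail_cons; auto]|].
    split; [exact B|]. split.
    + intros c' t Hu'. destruct (letter_cases a c') as [->| ->].
      * apply D_head with t; [exact B | exact Hu'].
      * eapply red_trans; [apply red_pre, red_dup|]. apply (HD (opp a) t); auto.
    + intros a' t Hw; injection Hw; intros _ <-.
      eapply red_trans; [apply red_dup|]. apply (HC a (opp a :: x)); auto.
  - destruct (IH _ Hs) as [_ [_ [_ HC]]].
    assert (Hvs : red (a :: a :: opp a :: x) (a :: s)) by (apply (HC a (opp a :: x)); auto).
    assert (B : forall c' t0 t', a :: s = c' :: t0 -> a :: a :: opp a :: x = c' :: t' ->
               red (a :: a :: opp a :: x) (a :: s)).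
    { intros; auto. }
    split; [exists (a :: s); split; [auto | apply tail_refl]|].
    split; [exact B|]. split.
    + intros c' t' H. injection H; intros; subst c'. apply D_head with s; [exact B | reflexivity].
    + intros a' t' Hw; injection Hw; intros _ <-. apply red_pre; auto.
Qed.

Lemma Inv_all : forall n w, length w <= n -> Inv w.
Proof.
  induction n as [|n IHn]; intros w Hl.
  - apply Inv_small; lia.
  - destruct w as [|a [|b [|c x]]]; try (apply Inv_small; simpl; lia).
    simpl in Hl.
    destruct (letter_cases a b) as [-> | ->].
    + destruct (letter_cases a c) as [-> | ->].
      * apply Inv_II, IHn; simpl; lia.
      * apply Inv_III, IHn; simpl; lia.
    + apply Inv_I, IHn; simpl; lia.
Qed.

Lemma rstep_step : forall x y, rstep x y -> step x y.
Proof. intros x y []; constructor. Qed.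

Lemma red_derivable : forall x y, red x y -> derivable x y.
Proof.
  intros x y H; induction H.
  - apply rt_step, rstep_step; auto.
  - apply rt_refl.
  - eapply rt_trans; eauto.
Qed.

Theorem mainTheorem9 : forall w u : word, lang w u -> derivable w u.
Proof.
  intros w u H.
  destruct (Inv_all (length w) w (le_n _) u H) as [[x [Hx [p ->]]] _].
  eapply rt_trans; [apply red_derivable; eauto|].
  apply rt_step, rule3.
Qed.
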